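(* In the altruistic controlled social learning model described in the context, the optimal value function $V^*_A:[0,1]\to\mathbb{R}$ is convex in the public belief $b$.
   Context: A binary state $\omega\in\{G,B\}$ is drawn once with $\mathbb{P}(\omega=G)=b_1$. Agents $i=1,2,\dots$ act in sequence. Before agent $i$ acts, a planner chooses a signal precision $q_i\in[0.5,1]$; agent $i$ receives a private signal $s_i\in\{G,B\}$ with $\mathbb{P}(s_i=\omega)=q_i$, conditionally independent of all other signals and of the history given $\omega$. Let $y(b,q)=1+2bq-b-q$ (probability of signal $G$ at public belief $b$) and $z(b,q)=b+q-2bq=1-y(b,q)$. Agent $i$, with public belief $b_i$, takes action $a_i=s_i$ if $1-q_i\le b_i\le q_i$, $a_i=G$ if $b_i>q_i$, $a_i=B$ if $b_i<1-q_i$. The public belief evolves by $b_{i+1}=\frac{q_ib_i}{y(b_i,q_i)}$ if $s_i=G$ and $b_{i+1}=\frac{(1-q_i)b_i}{z(b_i,q_i)}$ if $s_i=B$ when $1-q_i\le b_i\le q_i$, and $b_{i+1}=b_i$ otherwise. Cost of an incorrect action is $C>0$. The altruistic planner has baseline precision $p\in[0.5,1)$ and a cost function $\beta:[0.5,1]\to[0,\infty)$ that is non-negative, increasing, continuous and concave with $\beta(p)=0$; its instantaneous reward is $r_A(b,q)=-\beta(q)-C\min(b,1-b,1-q)$ (the second term being $-C$ times the probability that $a_i\ne\omega$). Policies are deterministic Markov maps $\pi:[0,1]\to[0.5,1]$ with $q_i=\pi(b_i)$. For a discount factor $\delta\in[0,1)$, $V^\pi_A(b)=\mathbb{E}\big[\sum_{i\ge1}\delta^{i-1}r_A(b_i,\pi(b_i))\mid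 b_1=b\big]$ and $V^*_A(b)=\sup_\pi V^\pi_A(b)$. *)

(* Defs.v *)
From Stdlib Require Import Reals Lra.
From Coquelicot Require Import Coquelicot.
Open Scope R_scope.

(* probability of signal G at public belief b, precision q *)
Definition ysig (b q : R) : R := 1 + 2 * b * q - b - q.
Definition zsig (b q : R) : R := b + q - 2 * b * q.

Definition rA (beta : R -> R) (C b q : R) : R :=
  - beta q - C * Rmin b (Rmin (1 - b) (1 - q)).

Definition policy (pi : R -> R) : Prop :=
  forall b, 0 <= b <= 1 -> 1/2 <= pi b <= 1.

(* n-step truncated expected discounted reward
   E[ sum_{i=1}^n delta^(i-1) r_A(b_i, pi b_i) | b_1 = b ],
   computed by first-step decomposition: in the informative region
   1-q <= b <= q the belief moves to qb/y w.p. y and (1-q)b/z w.p. z,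
   otherwise (cascade) it stays put. *)
Fixpoint Vn (beta : R -> R) (C delta : R) (pi : R -> R) (n : nat) (b : R) : R :=
  match n with
  | O => 0
  | S m =>
      let q := pi b in
      rA beta C b q + delta *
        (if Rle_dec (1 - q) b then
           if Rle_dec b q then
             ysig b q * Vn beta C delta pi m (q * b / ysig b q)
             + zsig b q * Vn beta C delta pi m ((1 - q) * b / zsig b q)
           else Vn beta C delta pi m b
         else Vn beta C delta pi m b)
  end.

Definition VA (beta : R -> R) (C delta : R) (pi : R -> R) (b : R) : R :=
  real (Lim_seq (fun n => Vn beta C delta pi n b)).

Definition VAstar (beta : R -> R) (C delta : R) (b : R) : R :=
  real (Lub_Rbar (fun v => exists pi, policy pi /\ v = VA beta C delta pi b)).

Definition continuous_on_Icc (f : R -> R) (a c : R) : Prop :=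
  forall x, a <= x <= c ->
    forall eps : R, 0 < eps -> exists d : R, 0 < d /\
      forall y, a <= y <= c -> Rabs (y - x) < d -> Rabs (f y - f x) < eps.

(* Main.v *)
Require Import Defs.
From Stdlib Require Import Reals Lra Lia Classical ClassicalEpsilon.
From Coquelicot Require Import Coquelicot.
Open Scope R_scope.

Definition cont (V : R -> R) (b q : R) : R :=
  if Rle_dec (1 - q) b then
    if Rle_dec b q then
      ysig b q * V (q * b / ysig b q) + zsig b q * V ((1 - q) * b / zsig b q)
    else V b
  else V b.

Definition step beta C delta (V : R -> R) (b q : R) : R :=
  rA beta C b q + delta * cont V b q.

Lemma Vn_S beta C delta pi n b :
  Vn beta C delta pi (S n) b = step beta C delta (Vn beta C delta pi n) b (pi b).
Proof. reflexivity. Qed.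

Lemma ysig_eq b q : ysig b q = q * b + (1 - q) * (1 - b).
Proof. unfold ysig; ring. Qed.
Lemma zsig_eq b q : zsig b q = (1 - q) * b + q * (1 - b).
Proof. unfold zsig; ring. Qed.

Lemma frac01 u v : 0 <= u -> 0 <= v -> 0 <= u / (u + v) <= 1.
Proof.
  intros Hu Hv. destruct (Req_dec (u + v) 0) as [H0|H0].
  - assert (u = 0) by lra. subst. unfold Rdiv. rewrite Rmult_0_l. lra.
  - split.
    + apply Rdiv_le_0_compat; lra.
    + apply Rmult_le_reg_r with (u + v); [lra|].
      unfold Rdiv. rewrite Rmult_assoc, Rinv_l by lra. lra.
Qed.

Lemma post01 b q : 0 <= b <= 1 -> 0 <= q <= 1 ->
  0 <= q * b / ysig b q <= 1 /\ 0 <= (1 - q) * b / zsig b q <= 1 /\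
  0 <= ysig b q /\ 0 <= zsig b q /\ ysig b q + zsig b q = 1.
Proof.
  intros Hb Hq. rewrite ysig_eq, zsig_eq.
  split; [|split; [|split; [|split]]].
  - apply frac01; nra.
  - apply frac01; nra.
  - nra.
  - nra.
  - ring.
Qed.

Lemma cont_mono V W e b q : 0 <= b <= 1 -> 0 <= q <= 1 ->
  (forall x, 0 <= x <= 1 -> V x <= W x + e) -> cont V b q <= cont W b q + e.
Proof.
  intros Hb Hq H. unfold cont.
  destruct (post01 b q Hb Hq) as (H1 & H2 & H3 & H4 & H5).
  destruct (Rle_dec (1 - q) b); [destruct (Rle_dec b q)|]; try (apply H; auto).
  pose proof (H _ H1). pose proof (H _ H2).
  apply Rmult_le_compat_l with (r := ysig b q) in H0; auto.
  apply Rmult_le_compat_l with (r := zsig b q) in H6; auto.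
  nra.
Qed.

Lemma cont_const c b q : 0 <= b <= 1 -> 0 <= q <= 1 -> cont (fun _ => c) b q = c.
Proof.
  intros Hb Hq. destruct (post01 b q Hb Hq) as (_ & _ & _ & _ & H5).
  unfold cont. destruct (Rle_dec (1 - q) b); [destruct (Rle_dec b q)|]; auto.
  rewrite <- Rmult_plus_distr_r, H5. ring.
Qed.

Lemma cont_bound V lo hi b q : 0 <= b <= 1 -> 0 <= q <= 1 ->
  (forall x, 0 <= x <= 1 -> lo <= V x <= hi) -> lo <= cont V b q <= hi.
Proof.
  intros Hb Hq H. split.
  - rewrite <- (cont_const lo b q) at 1 by auto.
    pose proof (cont_mono (fun _ => lo) V 0 b q Hb Hq). 
    assert (cont (fun _ => lo) b q <= cont V b q + 0) by (apply H0; intros; pose proof (H x H1); lra). lra.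
  - rewrite <- (cont_const hi b q) by auto.
    pose proof (cont_mono V (fun _ => hi) 0 b q Hb Hq).
    assert (cont V b q <= cont (fun _ => hi) b q + 0) by (apply H0; intros; pose proof (H x H1); lra). lra.
Qed.

Lemma rA_bound beta C b q : 0 < C -> 0 <= b <= 1 -> 1/2 <= q <= 1 ->
  0 <= beta q <= beta 1 -> - (beta 1 + C) <= rA beta C b q <= 0.
Proof.
  intros HC Hb Hq Hbe. unfold rA.
  assert (0 <= Rmin b (Rmin (1 - b) (1 - q)) <= 1).
  { unfold Rmin. repeat destruct Rle_dec; lra. }
  nra.
Qed.

Lemma step_mono beta C delta V W e b q : 0 <= delta -> 0 <= b <= 1 -> 0 <= q <= 1 ->
  (forall x, 0 <= x <= 1 -> V x <= W x + e) ->
  step beta C delta V b q <= step beta C delta W b q + delta * e.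
Proof.
  intros Hd Hb Hq H. unfold step.
  pose proof (cont_mono V W e b q Hb Hq H). nra.
Qed.

Lemma lub_props (E : R -> Prop) (x0 B : R) :
  E x0 -> (forall x, E x -> x <= B) ->
  (forall x, E x -> x <= real (Lub_Rbar E)) /\
  (forall y, (forall x, E x -> x <= y) -> real (Lub_Rbar E) <= y).
Proof.
  intros H0 HB.
  destruct (Lub_Rbar_correct E) as [Hub Hl].
  destruct (Lub_Rbar E) as [l| |] eqn:El; simpl.
  - split.
    + intros x Ex. exact (Hub x Ex).
    + intros y Hy. apply (Hl (Finite y)). intros x Ex. simpl. apply Hy; auto.
  - exfalso. specialize (Hl (Finite B)). simpl in Hl. apply Hl. intros x Ex; simpl; auto.
  - exfalso. specialize (Hub x0 H0). simpl in Hub. exact Hub.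
Qed.

Lemma lub_approx (E : R -> Prop) (x0 B : R) :
  E x0 -> (forall x, E x -> x <= B) ->
  forall eta, 0 < eta -> exists x, E x /\ real (Lub_Rbar E) - eta < x.
Proof.
  intros H0 HB eta Heta.
  destruct (lub_props E x0 B H0 HB) as [_ H2].
  apply NNPP; intro Hn.
  assert (real (Lub_Rbar E) <= real (Lub_Rbar E) - eta).
  { apply H2. intros x Ex. apply Rnot_lt_le. intro Hlt. apply Hn. exists x; auto. }
  lra.
Qed.

Lemma vanish (x y c d : R) : 0 <= d < 1 ->
  (forall n, x <= y + c * d ^ n) -> x <= y.
Proof.
  intros Hd H.
  destruct (Rle_dec x y) as [|Hn]; auto.
  exfalso.
  assert (Hc : 0 < c).
  { specialize (H 0%nat). simpl in H. lra. }
  destruct (pow_lt_1_zero d) with (y := (x - y) / c) as [N HN].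
  { rewrite Rabs_pos_eq; lra. }
  { apply Rdiv_lt_0_compat; lra. }
  specialize (HN N (le_n N)). specialize (H N).
  rewrite Rabs_pos_eq in HN by (apply pow_le; lra).
  apply (Rmult_lt_compat_l c) in HN; auto.
  replace (c * ((x - y) / c)) with (x - y) in HN by (field; lra).
  lra.
Qed.

Lemma lim_bound (u : nat -> R) (A d : R) : 0 <= A -> 0 <= d < 1 ->
  (forall n k, Rabs (u (k + n)%nat - u n) <= A * d ^ n) ->
  forall n, Rabs (real (Lim_seq u) - u n) <= A * d ^ n.
Proof.
  intros HA Hd H n.
  assert (Hc : ex_finite_lim_seq u).
  { apply ex_lim_seq_cauchy_corr. intros [eps Heps].
    destruct (Req_dec A 0) as [A0|A0].
    - exists 0%nat. intros i j _ _. simpl.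
      pose proof (H 0%nat i) as H1. pose proof (H 0%nat j) as H2.
      rewrite A0, Rmult_0_l, Nat.add_0_r in H1, H2.
      assert (Rabs (u i - u j) <= 0).
      { replace (u i - u j) with ((u i - u 0%nat) - (u j - u 0%nat)) by ring.
        eapply Rle_trans; [apply Rabs_triang|]. rewrite Rabs_Ropp. lra. }
      lra.
    - destruct (pow_lt_1_zero d) with (y := eps / (2 * A)) as [N HN].
      { rewrite Rabs_pos_eq; lra. }
      { apply Rdiv_lt_0_compat; lra. }
      exists N. intros i j Hi Hj. simpl.
      specialize (HN N (le_n N)).
      rewrite Rabs_pos_eq in HN by (apply pow_le; lra).
      pose proof (H N (i - N)%nat) as H1. pose proof (H N (j - N)%nat) as H2.
      replace (i - N + N)%nat with i in H1 by lia.
      replace (j - N + N)%nat with j in H2 by lia.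
      assert (A * d ^ N < eps / 2).
      { apply (Rmult_lt_compat_l A) in HN; [|lra].
        replace (A * (eps / (2 * A))) with (eps / 2) in HN by (field; lra). lra. }
      replace (u i - u j) with ((u i - u N) - (u j - u N)) by ring.
      eapply Rle_lt_trans; [apply Rabs_triang|]. rewrite Rabs_Ropp. lra. }
  destruct Hc as [l Hl].
  rewrite (is_lim_seq_unique _ _ Hl). simpl.
  apply (is_lim_seq_incr_n _ n) in Hl.
  apply Rabs_le. split.
  - assert (Rbar_le (u n - A * d ^ n) l).
    { apply (is_lim_seq_le (fun _ => u n - A * d ^ n) (fun k => u (k + n)%nat)); auto.
      2: apply is_lim_seq_const.
      intro k. specialize (H n k). apply Rabs_le_between' in H. lra. }
    simpl in H0. lra.
  - assert (Rbar_le l (u n + A * d ^ n)).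
    { apply (is_lim_seq_le (fun k => u (k + n)%nat) (fun _ => u n + A * d ^ n)); auto.
      2: apply is_lim_seq_const.
      intro k. specialize (H n k). apply Rabs_le_between' in H. lra. }
    simpl in H0. lra.
Qed.

Definition Tsup beta C delta (V : R -> R) (b : R) : R :=
  real (Lub_Rbar (fun x => exists q, 1/2 <= q <= 1 /\ x = step beta C delta V b q)).

Fixpoint U beta C delta (n : nat) : R -> R :=
  match n with
  | O => fun _ => 0
  | S m => Tsup beta C delta (U beta C delta m)
  end.

Definition bnd (V : R -> R) (K : R) := forall x, 0 <= x <= 1 -> - K <= V x <= 0.

Lemma Tsup_props beta C delta V b B :
  (forall q, 1/2 <= q <= 1 -> step beta C delta V b q <= B) ->
  (forall q, 1/2 <= q <= 1 -> step beta C delta V b q <= Tsup beta C delta V b) /\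
  (forall y, (forall q, 1/2 <= q <= 1 -> step beta C delta V b q <= y) -> Tsup beta C delta V b <= y) /\
  (forall eta, 0 < eta -> exists q, 1/2 <= q <= 1 /\ Tsup beta C delta V b - eta < step beta C delta V b q).
Proof.
  intros HB.
  set (E := fun x => exists q, 1/2 <= q <= 1 /\ x = step beta C delta V b q).
  assert (E0 : E (step beta C delta V b (1/2))) by (exists (1/2); split; [lra|auto]).
  assert (EB : forall x, E x -> x <= B) by (intros x [q [Hq ->]]; auto).
  destruct (lub_props E _ B E0 EB) as [P1 P2].
  unfold Tsup; fold E. split; [|split].
  - intros q Hq. apply P1. exists q; auto.
  - intros y Hy. apply P2. intros x [q [Hq ->]]. auto.
  - intros eta Heta. destruct (lub_approx E _ B E0 EB eta Heta) as [x [[q [Hq ->]] Hx]].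
    exists q; auto.
Qed.


Lemma step_bnd beta C delta V K b q : 0 < C -> 0 <= delta < 1 ->
  (forall q, 1/2 <= q <= 1 -> 0 <= beta q <= beta 1) ->
  K = (beta 1 + C) / (1 - delta) -> bnd V K -> 0 <= b <= 1 -> 1/2 <= q <= 1 ->
  - K <= step beta C delta V b q <= 0.
Proof.
  intros HC Hd Hbe HK HV Hb Hq. unfold step.
  pose proof (rA_bound beta C b q HC Hb Hq (Hbe q Hq)).
  assert (Hc : - K <= cont V b q <= 0) by (apply cont_bound; auto; lra).
  assert (K * (1 - delta) = beta 1 + C) by (rewrite HK; field; lra).
  nra.
Qed.

Lemma Tsup_bnd beta C delta V K : 0 < C -> 0 <= delta < 1 ->
  (forall q, 1/2 <= q <= 1 -> 0 <= beta q <= beta 1) ->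
  K = (beta 1 + C) / (1 - delta) -> bnd V K -> bnd (Tsup beta C delta V) K.
Proof.
  intros HC Hd Hbe HK HV b Hb.
  destruct (Tsup_props beta C delta V b 0) as (P1 & P2 & _).
  { intros q Hq. eapply step_bnd; eauto. }
  split.
  - eapply Rle_trans; [|apply (P1 (1/2)); lra].
    eapply step_bnd; eauto; lra.
  - apply P2. intros q Hq. eapply step_bnd; eauto.
Qed.

Lemma U_bnd beta C delta K : 0 < C -> 0 <= delta < 1 ->
  (forall q, 1/2 <= q <= 1 -> 0 <= beta q <= beta 1) ->
  K = (beta 1 + C) / (1 - delta) -> forall n, bnd (U beta C delta n) K.
Proof.
  intros HC Hd Hbe HK n. induction n.
  - intros x _. simpl. assert (0 <= K) by (rewrite HK; apply Rdiv_le_0_compat; pose proof (Hbe 1); lra). lra.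
  - simpl. eapply Tsup_bnd; eauto.
Qed.

Lemma Tsup_mono beta C delta V W K e : 0 < C -> 0 <= delta < 1 ->
  (forall q, 1/2 <= q <= 1 -> 0 <= beta q <= beta 1) ->
  K = (beta 1 + C) / (1 - delta) -> bnd V K -> bnd W K ->
  (forall x, 0 <= x <= 1 -> V x <= W x + e) ->
  forall b, 0 <= b <= 1 -> Tsup beta C delta V b <= Tsup beta C delta W b + delta * e.
Proof.
  intros HC Hd Hbe HK HV HW H b Hb.
  destruct (Tsup_props beta C delta V b 0) as (P1 & P2 & _).
  { intros q Hq. eapply step_bnd; eauto. }
  destruct (Tsup_props beta C delta W b 0) as (Q1 & Q2 & _).
  { intros q Hq. eapply step_bnd; eauto. }
  apply P2. intros q Hq.
  eapply Rle_trans; [apply step_mono; auto; lra|].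
  pose proof (Q1 q Hq). lra.
Qed.

Lemma U_contr beta C delta K : 0 < C -> 0 <= delta < 1 ->
  (forall q, 1/2 <= q <= 1 -> 0 <= beta q <= beta 1) ->
  K = (beta 1 + C) / (1 - delta) ->
  forall n x, 0 <= x <= 1 ->
    Rabs (U beta C delta (S n) x - U beta C delta n x) <= (beta 1 + C) * delta ^ n.
Proof.
  intros HC Hd Hbe HK n. induction n; intros x Hx.
  - simpl. rewrite Rminus_0_r, Rmult_1_r.
    destruct (Tsup_props beta C delta (fun _ => 0) x 0) as (P1 & P2 & _).
    { intros q Hq. unfold step. rewrite cont_const by lra.
      pose proof (rA_bound beta C x q HC Hx Hq (Hbe q Hq)). lra. }
    apply Rabs_le. split.
    + eapply Rle_trans; [|apply (P1 (1/2)); lra].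
      unfold step. rewrite cont_const by lra.
      pose proof (rA_bound beta C x (1/2) HC Hx ltac:(lra) (Hbe (1/2) ltac:(lra))). lra.
    + pose proof (Hbe 1 ltac:(lra)). apply Rle_trans with 0; [|lra].
      apply P2. intros q Hq. unfold step. rewrite cont_const by lra.
      pose proof (rA_bound beta C x q HC Hx Hq (Hbe q Hq)). lra.
  - pose proof (U_bnd beta C delta K HC Hd Hbe HK) as UB.
    change (U beta C delta (S (S n)) x) with (Tsup beta C delta (U beta C delta (S n)) x).
    change (U beta C delta (S n) x) with (Tsup beta C delta (U beta C delta n) x).
    apply Rabs_le. split.
    + pose proof (Tsup_mono beta C delta (U beta C delta n) (U beta C delta (S n)) K
        ((beta 1 + C) * delta ^ n) HC Hd Hbe HK (UB n) (UB (S n))) as T.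
      assert (Tsup beta C delta (U beta C delta n) x <= Tsup beta C delta (U beta C delta (S n)) x
                + delta * ((beta 1 + C) * delta ^ n)).
      { apply T; auto. intros y Hy. specialize (IHn y Hy). apply Rabs_le_between' in IHn. lra. }
      change (delta ^ S n) with (delta * delta ^ n). lra.
    + pose proof (Tsup_mono beta C delta (U beta C delta (S n)) (U beta C delta n) K
        ((beta 1 + C) * delta ^ n) HC Hd Hbe HK (UB (S n)) (UB n)) as T.
      assert (Tsup beta C delta (U beta C delta (S n)) x <= Tsup beta C delta (U beta C delta n) x
                + delta * ((beta 1 + C) * delta ^ n)).
      { apply T; auto. intros y Hy. specialize (IHn y Hy). apply Rabs_le_between' in IHn. lra. }
      change (delta ^ S n) with (delta * delta ^ n). lra.
Qed.

Lemma Vn_le_U beta C delta K pi : 0 < C -> 0 <= delta < 1 ->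
  (forall q, 1/2 <= q <= 1 -> 0 <= beta q <= beta 1) ->
  K = (beta 1 + C) / (1 - delta) -> policy pi ->
  forall n x, 0 <= x <= 1 -> Vn beta C delta pi n x <= U beta C delta n x.
Proof.
  intros HC Hd Hbe HK Hpi n. induction n; intros x Hx.
  - simpl; lra.
  - rewrite Vn_S. simpl.
    destruct (Tsup_props beta C delta (U beta C delta n) x 0) as (P1 & _ & _).
    { intros q Hq. eapply step_bnd; eauto. eapply U_bnd; eauto. }
    eapply Rle_trans; [apply (step_mono _ _ _ _ (U beta C delta n) 0); auto; try lra|].
    { pose proof (Hpi x Hx); lra. }
    { intros y Hy. specialize (IHn y Hy). lra. }
    rewrite Rmult_0_r, Rplus_0_r. apply P1. apply Hpi; auto.
Qed.

Lemma Vn_contr beta C delta pi : 0 < C -> 0 <= delta < 1 ->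
  (forall q, 1/2 <= q <= 1 -> 0 <= beta q <= beta 1) -> policy pi ->
  forall n x, 0 <= x <= 1 ->
    Rabs (Vn beta C delta pi (S n) x - Vn beta C delta pi n x) <= (beta 1 + C) * delta ^ n.
Proof.
  intros HC Hd Hbe Hpi n. induction n; intros x Hx; pose proof (Hpi x Hx) as Hq.
  - rewrite Vn_S. simpl. unfold step. change (fun _ : R => 0) with (fun _ : R => 0).
    rewrite cont_const by lra. rewrite Rmult_1_r.
    pose proof (rA_bound beta C x (pi x) HC Hx Hq (Hbe _ Hq)).
    apply Rabs_le. lra.
  - rewrite (Vn_S _ _ _ _ (S n)), (Vn_S _ _ _ _ n).
    apply Rabs_le. split.
    + pose proof (step_mono beta C delta (Vn beta C delta pi n) (Vn beta C delta pi (S n))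
        ((beta 1 + C) * delta ^ n) x (pi x) ltac:(lra) Hx ltac:(lra)).
      assert (step beta C delta (Vn beta C delta pi n) x (pi x) <=
              step beta C delta (Vn beta C delta pi (S n)) x (pi x) + delta * ((beta 1 + C) * delta ^ n)).
      { apply H. intros y Hy. specialize (IHn y Hy). apply Rabs_le_between' in IHn. lra. }
      change (delta ^ S n) with (delta * delta ^ n). lra.
    + pose proof (step_mono beta C delta (Vn beta C delta pi (S n)) (Vn beta C delta pi n)
        ((beta 1 + C) * delta ^ n) x (pi x) ltac:(lra) Hx ltac:(lra)).
      assert (step beta C delta (Vn beta C delta pi (S n)) x (pi x) <=
              step beta C delta (Vn beta C delta pi n) x (pi x) + delta * ((beta 1 + C) * delta ^ n)).
      { apply H. intros y Hy. specialize (IHn y Hy). apply Rabs_le_between' in IHn. lra. }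
      change (delta ^ S n) with (delta * delta ^ n). lra.
Qed.

Lemma VA_near beta C delta pi : 0 < C -> 0 <= delta < 1 ->
  (forall q, 1/2 <= q <= 1 -> 0 <= beta q <= beta 1) -> policy pi ->
  forall n b, 0 <= b <= 1 ->
    Rabs (VA beta C delta pi b - Vn beta C delta pi n b) <= ((beta 1 + C) / (1 - delta)) * delta ^ n.
Proof.
  intros HC Hd Hbe Hpi n b Hb. unfold VA.
  assert (HM : 0 <= beta 1 + C) by (pose proof (Hbe 1); lra).
  apply (lim_bound (fun n => Vn beta C delta pi n b)); auto.
  { apply Rdiv_le_0_compat; lra. }
  intros m k.
  assert (forall k, Rabs (Vn beta C delta pi (k + m) b - Vn beta C delta pi m b)
            <= (beta 1 + C) * (delta ^ m - delta ^ (k + m)) / (1 - delta)).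
  { induction k0.
    - simpl. rewrite Rminus_diag, Rabs_R0. unfold Rdiv. rewrite Rminus_diag. lra.
    - pose proof (Vn_contr beta C delta pi HC Hd Hbe Hpi (k0 + m) b Hb).
      replace (S k0 + m)%nat with (S (k0 + m)) by lia.
      eapply Rle_trans.
      { replace (Vn beta C delta pi (S (k0 + m)) b - Vn beta C delta pi m b) with
          ((Vn beta C delta pi (S (k0 + m)) b - Vn beta C delta pi (k0 + m) b) +
           (Vn beta C delta pi (k0 + m) b - Vn beta C delta pi m b)) by ring.
        apply Rabs_triang. }
      simpl pow. apply Rle_trans with ((beta 1 + C) * delta ^ (k0 + m) +
          (beta 1 + C) * (delta ^ m - delta ^ (k0 + m)) / (1 - delta)); [lra|].
      right. field. lra. }
  eapply Rle_trans; [apply H|].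
  pose proof (pow_le delta (k + m) ltac:(lra)).
  apply Rle_trans with ((beta 1 + C) * delta ^ m / (1 - delta)).
  - unfold Rdiv. apply Rmult_le_compat_r; [left; apply Rinv_0_lt_compat; lra|]. nra.
  - right. field. lra.
Qed.

Lemma Vn_ge beta C delta K pi W eta : 0 < C -> 0 <= delta < 1 ->
  (forall q, 1/2 <= q <= 1 -> 0 <= beta q <= beta 1) ->
  K = (beta 1 + C) / (1 - delta) -> bnd W K -> 0 <= eta -> policy pi ->
  (forall x, 0 <= x <= 1 -> W x - eta <= step beta C delta W x (pi x)) ->
  forall m x, 0 <= x <= 1 -> W x - (eta / (1 - delta) + delta ^ m * K) <= Vn beta C delta pi m x.
Proof.
  intros HC Hd Hbe HK HW Heta Hpi H m. induction m; intros x Hx.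
  - simpl. pose proof (HW x Hx). assert (0 <= eta / (1 - delta)) by (apply Rdiv_le_0_compat; lra). lra.
  - rewrite Vn_S. pose proof (Hpi x Hx).
    pose proof (step_mono beta C delta W (Vn beta C delta pi m) (eta / (1 - delta) + delta ^ m * K)
      x (pi x) ltac:(lra) Hx ltac:(lra)) as T.
    assert (step beta C delta W x (pi x) <= step beta C delta (Vn beta C delta pi m) x (pi x)
             + delta * (eta / (1 - delta) + delta ^ m * K)).
    { apply T. intros y Hy. specialize (IHm y Hy). lra. }
    pose proof (H x Hx).
    assert (eta + delta * (eta / (1 - delta) + delta ^ m * K) = eta / (1 - delta) + delta ^ S m * K)
      by (simpl; field; lra).
    lra.
Qed.

Lemma policy_exists beta C delta K n eps : 0 < C -> 0 <= delta < 1 ->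
  (forall q, 1/2 <= q <= 1 -> 0 <= beta q <= beta 1) ->
  K = (beta 1 + C) / (1 - delta) -> 0 < eps ->
  exists pi, policy pi /\ forall x, 0 <= x <= 1 ->
    Tsup beta C delta (U beta C delta n) x - eps < step beta C delta (U beta C delta n) x (pi x).
Proof.
  intros HC Hd Hbe HK He.
  assert (Hex : forall x, exists q, 1/2 <= q <= 1 /\ (0 <= x <= 1 ->
     Tsup beta C delta (U beta C delta n) x - eps < step beta C delta (U beta C delta n) x q)).
  { intro x. destruct (classic (0 <= x <= 1)) as [Hx|Hx].
    - destruct (Tsup_props beta C delta (U beta C delta n) x 0) as (_ & _ & P3).
      { intros q Hq. eapply step_bnd; eauto. eapply U_bnd; eauto. }
      destruct (P3 eps He) as [q [Hq Hq']]. exists q. auto.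
    - exists (1/2). split; [lra|]. intro; contradiction. }
  exists (fun x => proj1_sig (constructive_indefinite_description _ (Hex x))).
  split.
  - intros x Hx. exact (proj1 (proj2_sig (constructive_indefinite_description _ (Hex x)))).
  - intros x Hx. exact (proj2 (proj2_sig (constructive_indefinite_description _ (Hex x))) Hx).
Qed.

Lemma VAstar_sandwich beta C delta K : 0 < C -> 0 <= delta < 1 ->
  (forall q, 1/2 <= q <= 1 -> 0 <= beta q <= beta 1) ->
  K = (beta 1 + C) / (1 - delta) ->
  forall n b, 0 <= b <= 1 ->
    U beta C delta n b - (3 * K) * delta ^ n <= VAstar beta C delta b <=
    U beta C delta n b + K * delta ^ n.
Proof.
  intros HC Hd Hbe HK n b Hb.
  set (E := fun v => exists pi, policy pi /\ v = VA beta C delta pi b).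
  set (pi0 := fun _ : R => 1/2).
  assert (Hp0 : policy pi0) by (intros x _; unfold pi0; lra).
  assert (E0 : E (VA beta C delta pi0 b)) by (exists pi0; auto).
  assert (EB : forall v, E v -> v <= U beta C delta n b + K * delta ^ n).
  { intros v [pi [Hpi ->]].
    pose proof (VA_near beta C delta pi HC Hd Hbe Hpi n b Hb). rewrite <- HK in H.
    pose proof (Vn_le_U beta C delta K pi HC Hd Hbe HK Hpi n b Hb).
    apply Rabs_le_between' in H. lra. }
  destruct (lub_props E _ _ E0 EB) as [P1 P2].
  unfold VAstar. fold E. split.
  - assert (HK0 : 0 <= K) by (rewrite HK; apply Rdiv_le_0_compat; pose proof (Hbe 1); lra).
    assert (forall eps, 0 < eps -> U beta C delta n b - (3 * K) * delta ^ n - eps / (1 - delta)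
               <= real (Lub_Rbar E)).
    { intros eps He.
      destruct (policy_exists beta C delta K n eps HC Hd Hbe HK He) as [pi [Hpi Hpi']].
      assert (EV : E (VA beta C delta pi b)) by (exists pi; auto).
      pose proof (P1 _ EV).
      pose proof (VA_near beta C delta pi HC Hd Hbe Hpi n b Hb). rewrite <- HK in H0.
      apply Rabs_le_between' in H0.
      pose proof (Vn_ge beta C delta K pi (U beta C delta n) ((beta 1 + C) * delta ^ n + eps)
        HC Hd Hbe HK (U_bnd beta C delta K HC Hd Hbe HK n)) as G.
      assert (0 <= (beta 1 + C) * delta ^ n + eps).
      { pose proof (Hbe 1). pose proof (pow_le delta n ltac:(lra)). nra. }
      specialize (G H1 Hpi).
      assert (G' : forall x, 0 <= x <= 1 -> U beta C delta n x - ((beta 1 + C) * delta ^ n + eps)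
                  <= step beta C delta (U beta C delta n) x (pi x)).
      { intros x Hx. specialize (Hpi' x Hx).
        pose proof (U_contr beta C delta K HC Hd Hbe HK n x Hx). apply Rabs_le_between' in H2.
        simpl in H2. lra. }
      specialize (G G' n b Hb).
      assert (((beta 1 + C) * delta ^ n + eps) / (1 - delta) = K * delta ^ n + eps / (1 - delta))
        by (rewrite HK; field; lra).
      pose proof (pow_le delta n ltac:(lra)).
      nra. }
    apply Rnot_lt_le. intro Hlt.
    set (g := U beta C delta n b - 3 * K * delta ^ n - real (Lub_Rbar E)).
    specialize (H (g * (1 - delta) / 2)).
    assert (0 < g * (1 - delta) / 2) by (unfold g; apply Rdiv_lt_0_compat; [apply Rmult_lt_0_compat|]; lra).
    specialize (H H0).
    replace (g * (1 - delta) / 2 / (1 - delta)) with (g / 2) in H by (field; lra).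
    unfold g in H. lra.
  - apply P2. auto.
Qed.

Definition convex01 (V : R -> R) := forall x y t, 0 <= x <= 1 -> 0 <= y <= 1 -> 0 <= t <= 1 ->
  V (t * x + (1 - t) * y) <= t * V x + (1 - t) * V y.

Definition phi (V : R -> R) (u v : R) := (u + v) * V (u / (u + v)).

Lemma mul_frac t s u S : 0 <= u <= s -> S <> 0 -> t * s / S * (u / s) = t * u / S.
Proof.
  intros Hu HS. destruct (Req_dec s 0) as [H0|H0].
  - assert (u = 0) by lra. subst. unfold Rdiv. ring.
  - field. auto.
Qed.

Lemma phi_convex V u1 v1 u2 v2 t : convex01 V -> 0 <= u1 -> 0 <= v1 -> 0 <= u2 -> 0 <= v2 -> 0 <= t <= 1 ->
  phi V (t * u1 + (1 - t) * u2) (t * v1 + (1 - t) * v2) <= t * phi V u1 v1 + (1 - t) * phi V u2 v2.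
Proof.
  intros HV Hu1 Hv1 Hu2 Hv2 Ht. unfold phi.
  set (s1 := u1 + v1). set (s2 := u2 + v2).
  replace (t * u1 + (1 - t) * u2 + (t * v1 + (1 - t) * v2)) with (t * s1 + (1 - t) * s2)
    by (unfold s1, s2; ring).
  set (S := t * s1 + (1 - t) * s2).
  assert (Hts1 : 0 <= t * s1) by (unfold s1; nra).
  assert (Hts2 : 0 <= (1 - t) * s2) by (unfold s2; nra).
  destruct (Req_dec S 0) as [HS|HS].
  - assert (t * s1 = 0) by (unfold S in HS; lra).
    assert ((1 - t) * s2 = 0) by (unfold S in HS; lra).
    rewrite HS, Rmult_0_l, <- !Rmult_assoc, H, H0. lra.
  - assert (HSp : 0 < S) by (unfold S in *; lra).
    set (mu := t * s1 / S).
    assert (Hmu1 : 1 - mu = (1 - t) * s2 / S) by (unfold mu, S; field; auto).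
    assert (Hmu : 0 <= mu <= 1).
    { split. apply Rdiv_le_0_compat; lra.
      assert (0 <= (1 - t) * s2 / S) by (apply Rdiv_le_0_compat; lra). lra. }
    assert (Hx1 : 0 <= u1 / s1 <= 1) by (apply frac01; auto).
    assert (Hx2 : 0 <= u2 / s2 <= 1) by (apply frac01; auto).
    assert (Heq : (t * u1 + (1 - t) * u2) / S = mu * (u1 / s1) + (1 - mu) * (u2 / s2)).
    { rewrite Hmu1. unfold mu. rewrite !mul_frac by (unfold s1, s2; lra || auto).
      field. auto. }
    rewrite Heq.
    pose proof (HV _ _ mu Hx1 Hx2 Hmu).
    apply Rmult_le_compat_l with (r := S) in H; [|lra].
    eapply Rle_trans; [apply H|]. right.
    rewrite Rmult_plus_distr_l, <- !Rmult_assoc.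
    replace (S * mu) with (t * s1) by (unfold mu; field; auto).
    replace (S * (1 - mu)) with ((1 - t) * s2) by (rewrite Hmu1; field; auto).
    ring.
Qed.

Definition PV (V : R -> R) (b q : R) :=
  ysig b q * V (q * b / ysig b q) + zsig b q * V ((1 - q) * b / zsig b q).

Lemma PV_phi V b q : PV V b q = phi V (q * b) ((1 - q) * (1 - b)) + phi V ((1 - q) * b) (q * (1 - b)).
Proof. unfold PV, phi. rewrite ysig_eq, zsig_eq. reflexivity. Qed.

Definition gg beta C delta V b q := - beta q - C * (1 - q) + delta * PV V b q.
Definition hh C delta (V : R -> R) b := - C * Rmin b (1 - b) + delta * V b.

Lemma step_info beta C delta V b q : 1 - q <= b <= q ->
  step beta C delta V b q = gg beta C delta V b q.
Proof.
  intros H. unfold step, cont, gg, rA, PV.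
  destruct (Rle_dec (1 - q) b); [|lra]. destruct (Rle_dec b q); [|lra].
  replace (Rmin b (Rmin (1 - b) (1 - q))) with (1 - q); [ring|].
  unfold Rmin. repeat destruct Rle_dec; lra.
Qed.

Lemma step_casc beta C delta V b q : ~ (1 - q <= b <= q) -> 0 <= beta q -> 0 < C ->
  step beta C delta V b q <= hh C delta V b.
Proof.
  intros H Hb HC. unfold step, cont, hh, rA.
  replace (Rmin b (Rmin (1 - b) (1 - q))) with (Rmin b (1 - b)).
  2: { unfold Rmin. repeat destruct Rle_dec; lra. }
  destruct (Rle_dec (1 - q) b); [destruct (Rle_dec b q)|]; try lra.
Qed.

Lemma step_half beta C delta V b : beta (1/2) = 0 -> 0 <= b <= 1 ->
  step beta C delta V b (1/2) = hh C delta V b.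
Proof.
  intros H0 Hb. unfold step, cont, hh, rA. rewrite H0.
  replace (Rmin b (Rmin (1 - b) (1 - 1/2))) with (Rmin b (1 - b)).
  2: { unfold Rmin. repeat destruct Rle_dec; lra. }
  destruct (Rle_dec (1 - 1/2) b); [destruct (Rle_dec b (1/2))|]; try ring.
  assert (b = 1/2) by lra. subst.
  unfold ysig, zsig.
  replace (1 / 2 * (1 / 2) / (1 + 2 * (1 / 2) * (1 / 2) - 1 / 2 - 1 / 2)) with (1/2) by field.
  replace ((1 - 1 / 2) * (1 / 2) / (1 / 2 + 1 / 2 - 2 * (1 / 2) * (1 / 2))) with (1/2) by field.
  ring.
Qed.

Lemma gg_convex beta C delta V q : convex01 V -> 0 <= delta -> 0 <= q <= 1 ->
  forall x y t, 0 <= x <= 1 -> 0 <= y <= 1 -> 0 <= t <= 1 ->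
  gg beta C delta V (t * x + (1 - t) * y) q <= t * gg beta C delta V x q + (1 - t) * gg beta C delta V y q.
Proof.
  intros HV Hd Hq x y t Hx Hy Ht. unfold gg. rewrite !PV_phi.
  replace (q * (t * x + (1 - t) * y)) with (t * (q * x) + (1 - t) * (q * y)) by ring.
  replace ((1 - q) * (1 - (t * x + (1 - t) * y))) with (t * ((1 - q) * (1 - x)) + (1 - t) * ((1 - q) * (1 - y))) by ring.
  replace ((1 - q) * (t * x + (1 - t) * y)) with (t * ((1 - q) * x) + (1 - t) * ((1 - q) * y)) by ring.
  replace (q * (1 - (t * x + (1 - t) * y))) with (t * (q * (1 - x)) + (1 - t) * (q * (1 - y))) by ring.
  pose proof (phi_convex V (q * x) ((1 - q) * (1 - x)) (q * y) ((1 - q) * (1 - y)) t HV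
    ltac:(nra) ltac:(nra) ltac:(nra) ltac:(nra) Ht).
  pose proof (phi_convex V ((1 - q) * x) (q * (1 - x)) ((1 - q) * y) (q * (1 - y)) t HV
    ltac:(nra) ltac:(nra) ltac:(nra) ltac:(nra) Ht).
  nra.
Qed.

Lemma hh_convex C delta V : convex01 V -> 0 <= delta -> 0 < C ->
  forall x y t, 0 <= x <= 1 -> 0 <= y <= 1 -> 0 <= t <= 1 ->
  hh C delta V (t * x + (1 - t) * y) <= t * hh C delta V x + (1 - t) * hh C delta V y.
Proof.
  intros HV Hd HC x y t Hx Hy Ht. unfold hh.
  pose proof (HV x y t Hx Hy Ht).
  assert (t * Rmin x (1 - x) + (1 - t) * Rmin y (1 - y) <= Rmin (t * x + (1 - t) * y) (1 - (t * x + (1 - t) * y))).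
  { assert (Rmin x (1 - x) <= x /\ Rmin x (1 - x) <= 1 - x) by (unfold Rmin; destruct Rle_dec; lra).
    assert (Rmin y (1 - y) <= y /\ Rmin y (1 - y) <= 1 - y) by (unfold Rmin; destruct Rle_dec; lra).
    unfold Rmin at 3. destruct Rle_dec; nra. }
  nra.
Qed.

Lemma PV_convex_q V b q1 q2 l : convex01 V -> 0 <= b <= 1 -> 0 <= q1 <= 1 -> 0 <= q2 <= 1 -> 0 <= l <= 1 ->
  PV V b (l * q1 + (1 - l) * q2) <= l * PV V b q1 + (1 - l) * PV V b q2.
Proof.
  intros HV Hb H1 H2 Hl. rewrite !PV_phi.
  replace ((l * q1 + (1 - l) * q2) * b) with (l * (q1 * b) + (1 - l) * (q2 * b)) by ring.
  replace ((1 - (l * q1 + (1 - l) * q2)) * (1 - b)) with (l * ((1 - q1) * (1 - b)) + (1 - l) * ((1 - q2) * (1 - b))) by ring.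
  replace ((1 - (l * q1 + (1 - l) * q2)) * b) with (l * ((1 - q1) * b) + (1 - l) * ((1 - q2) * b)) by ring.
  replace ((l * q1 + (1 - l) * q2) * (1 - b)) with (l * (q1 * (1 - b)) + (1 - l) * (q2 * (1 - b))) by ring.
  pose proof (phi_convex V (q1 * b) ((1 - q1) * (1 - b)) (q2 * b) ((1 - q2) * (1 - b)) l HV
    ltac:(nra) ltac:(nra) ltac:(nra) ltac:(nra) Hl).
  pose proof (phi_convex V ((1 - q1) * b) (q1 * (1 - b)) ((1 - q2) * b) (q2 * (1 - b)) l HV
    ltac:(nra) ltac:(nra) ltac:(nra) ltac:(nra) Hl).
  lra.
Qed.

Lemma PV_half V b : PV V b (1/2) = V b.
Proof.
  unfold PV, ysig, zsig.
  replace (1 + 2 * b * (1 / 2) - b - 1 / 2) with (1/2) by field.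
  replace (b + 1 / 2 - 2 * b * (1 / 2)) with (1/2) by field.
  replace (1 / 2 * b / (1 / 2)) with b by field.
  replace ((1 - 1 / 2) * b / (1 / 2)) with b by field.
  field.
Qed.

Lemma gg_le_T beta C delta V K : 0 < C -> 0 <= delta < 1 ->
  (forall q, 1/2 <= q <= 1 -> 0 <= beta q <= beta 1) -> beta (1/2) = 0 ->
  (forall q1 q2 t, 1/2 <= q1 <= 1 -> 1/2 <= q2 <= 1 -> 0 <= t <= 1 ->
      t * beta q1 + (1 - t) * beta q2 <= beta (t * q1 + (1 - t) * q2)) ->
  K = (beta 1 + C) / (1 - delta) -> bnd V K -> convex01 V ->
  forall b q, 0 <= b <= 1 -> 1/2 <= q <= 1 -> gg beta C delta V b q <= Tsup beta C delta V b.
Proof.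
  intros HC Hd Hbe Hb0 Hconc HK HVb HV b q Hb Hq.
  destruct (Tsup_props beta C delta V b 0) as (P1 & _ & _).
  { intros q' Hq'. eapply step_bnd; eauto. }
  pose proof (P1 (1/2) ltac:(lra)) as Th. rewrite step_half in Th by auto.
  destruct (Rle_dec (1 - q) b) as [H1|H1]; [destruct (Rle_dec b q) as [H2|H2]|].
  - rewrite <- step_info by lra. apply P1; auto.
  -
    pose proof (P1 b ltac:(lra)) as Tb. rewrite step_info in Tb by lra.
    set (l := (q - 1/2) / (b - 1/2)).
    assert (Hl : 0 <= l <= 1).
    { unfold l. split. apply Rdiv_le_0_compat; lra.
      apply Rmult_le_reg_r with (b - 1/2); [lra|]. unfold Rdiv. rewrite Rmult_assoc, Rinv_l by lra. lra. }
    assert (Hqe : q = l * b + (1 - l) * (1/2)) by (unfold l; field; lra).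
    pose proof (Hconc b (1/2) l ltac:(lra) ltac:(lra) Hl) as Hbq. rewrite <- Hqe, Hb0 in Hbq.
    pose proof (PV_convex_q V b b (1/2) l HV Hb ltac:(lra) ltac:(lra) Hl) as HP.
    rewrite <- Hqe, PV_half in HP.
    assert (Rmin b (1 - b) = 1 - b) by (unfold Rmin; destruct Rle_dec; lra).
    unfold gg, hh in *. rewrite H in Th.
    assert (gg beta C delta V b q <= l * gg beta C delta V b b + (1 - l) * hh C delta V b).
    { unfold gg, hh. rewrite H. nra. }
    unfold gg, hh in H0. rewrite H in H0. nra.
  -
    pose proof (P1 (1 - b) ltac:(lra)) as Tb. rewrite step_info in Tb by lra.
    set (l := (q - 1/2) / (1/2 - b)).
    assert (Hl : 0 <= l <= 1).
    { unfold l. split. apply Rdiv_le_0_compat; lra.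
      apply Rmult_le_reg_r with (1/2 - b); [lra|]. unfold Rdiv. rewrite Rmult_assoc, Rinv_l by lra. lra. }
    assert (Hqe : q = l * (1 - b) + (1 - l) * (1/2)) by (unfold l; field; lra).
    pose proof (Hconc (1 - b) (1/2) l ltac:(lra) ltac:(lra) Hl) as Hbq. rewrite <- Hqe, Hb0 in Hbq.
    pose proof (PV_convex_q V b (1 - b) (1/2) l HV Hb ltac:(lra) ltac:(lra) Hl) as HP.
    rewrite <- Hqe, PV_half in HP.
    assert (Rmin b (1 - b) = b) by (unfold Rmin; destruct Rle_dec; lra).
    assert (gg beta C delta V b q <= l * gg beta C delta V b (1 - b) + (1 - l) * hh C delta V b).
    { unfold gg, hh. rewrite H. replace (1 - (1 - b)) with b by ring. nra. }
    nra.
Qed.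

Lemma T_convex beta C delta V K : 0 < C -> 0 <= delta < 1 ->
  (forall q, 1/2 <= q <= 1 -> 0 <= beta q <= beta 1) -> beta (1/2) = 0 ->
  (forall q1 q2 t, 1/2 <= q1 <= 1 -> 1/2 <= q2 <= 1 -> 0 <= t <= 1 ->
      t * beta q1 + (1 - t) * beta q2 <= beta (t * q1 + (1 - t) * q2)) ->
  K = (beta 1 + C) / (1 - delta) -> bnd V K -> convex01 V -> convex01 (Tsup beta C delta V).
Proof.
  intros HC Hd Hbe Hb0 Hconc HK HVb HV x y t Hx Hy Ht.
  assert (Hz : 0 <= t * x + (1 - t) * y <= 1) by nra.
  destruct (Tsup_props beta C delta V (t * x + (1 - t) * y) 0) as (_ & P2 & _).
  { intros q' Hq'. eapply step_bnd; eauto. }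
  destruct (Tsup_props beta C delta V x 0) as (X1 & _ & _).
  { intros q' Hq'. eapply step_bnd; eauto. }
  destruct (Tsup_props beta C delta V y 0) as (Y1 & _ & _).
  { intros q' Hq'. eapply step_bnd; eauto. }
  apply P2. intros q Hq.
  destruct (classic (1 - q <= t * x + (1 - t) * y <= q)) as [Hi|Hi].
  - rewrite step_info by auto.
    eapply Rle_trans; [apply gg_convex; auto; lra|].
    pose proof (gg_le_T beta C delta V K HC Hd Hbe Hb0 Hconc HK HVb HV x q Hx Hq).
    pose proof (gg_le_T beta C delta V K HC Hd Hbe Hb0 Hconc HK HVb HV y q Hy Hq).
    nra.
  - eapply Rle_trans; [apply step_casc; auto; apply Hbe; auto|].
    eapply Rle_trans; [apply hh_convex; auto; lra|].
    pose proof (X1 (1/2) ltac:(lra)). pose proof (Y1 (1/2) ltac:(lra)).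
    rewrite step_half in H, H0 by auto.
    nra.
Qed.

Lemma U_convex beta C delta K : 0 < C -> 0 <= delta < 1 ->
  (forall q, 1/2 <= q <= 1 -> 0 <= beta q <= beta 1) -> beta (1/2) = 0 ->
  (forall q1 q2 t, 1/2 <= q1 <= 1 -> 1/2 <= q2 <= 1 -> 0 <= t <= 1 ->
      t * beta q1 + (1 - t) * beta q2 <= beta (t * q1 + (1 - t) * q2)) ->
  K = (beta 1 + C) / (1 - delta) -> forall n, convex01 (U beta C delta n).
Proof.
  intros HC Hd Hbe Hb0 Hconc HK n. induction n.
  - intros x y t _ _ _. simpl. lra.
  - simpl. eapply T_convex; eauto. eapply U_bnd; eauto.
Qed.

Theorem theorem2 (p C delta : R) (beta : R -> R)
  (hp : 1/2 <= p < 1) (hC : 0 < C) (hdelta : 0 <= delta < 1)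
  (hbeta_nonneg : forall q, 1/2 <= q <= 1 -> 0 <= beta q)
  (hbeta_incr : forall q1 q2, 1/2 <= q1 -> q1 <= q2 -> q2 <= 1 -> beta q1 <= beta q2)
  (hbeta_cont : continuous_on_Icc beta (1/2) 1)
  (hbeta_concave : forall q1 q2 t, 1/2 <= q1 <= 1 -> 1/2 <= q2 <= 1 -> 0 <= t <= 1 ->
      t * beta q1 + (1 - t) * beta q2 <= beta (t * q1 + (1 - t) * q2))
  (hbeta_p : beta p = 0) :
  forall b1 b2 t, 0 <= b1 <= 1 -> 0 <= b2 <= 1 -> 0 <= t <= 1 ->
    VAstar beta C delta (t * b1 + (1 - t) * b2)
      <= t * VAstar beta C delta b1 + (1 - t) * VAstar beta C delta b2.
Proof.
  intros b1 b2 t H1 H2 Ht.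
  assert (Hbe : forall q, 1/2 <= q <= 1 -> 0 <= beta q <= beta 1).
  { intros q Hq. split; [apply hbeta_nonneg; auto|apply hbeta_incr; lra]. }
  assert (Hb0 : beta (1/2) = 0).
  { pose proof (hbeta_incr (1/2) p ltac:(lra) ltac:(lra) ltac:(lra)).
    pose proof (hbeta_nonneg (1/2) ltac:(lra)). lra. }
  set (K := (beta 1 + C) / (1 - delta)).
  assert (HK : K = (beta 1 + C) / (1 - delta)) by reflexivity.
  assert (Hz : 0 <= t * b1 + (1 - t) * b2 <= 1) by nra.
  apply (vanish _ _ (4 * K) delta hdelta). intro n.
  pose proof (VAstar_sandwich beta C delta K hC hdelta Hbe HK n _ Hz).
  pose proof (VAstar_sandwich beta C delta K hC hdelta Hbe HK n _ H1).
  pose proof (VAstar_sandwich beta C delta K hC hdelta Hbe HK n _ H2).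
  pose proof (U_convex beta C delta K hC hdelta Hbe Hb0 hbeta_concave HK n b1 b2 t H1 H2 Ht).
  nra.
Qed.
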